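(* Let $k\in\mathbb{N}$, $g\in\mathbb{Z}$ with $-k<g\le k$, $b\in\mathbb{R}$, and $z\in\mathbb{C}$ with $\mathrm{Re}(z)>0$ and $\mathrm{Re}(1/z)\ge k/2$. Define \[ \mathcal{I}_{k,g,b}(z):=e^{\frac{2\pi b}{kz}}z^{\frac52}\int_{-\infty}^{\infty}e^{-\frac{2\pi u^2}{kz}}f_{k,g}(u)\,du,\qquad \mathcal{J}_{k,g,b}(z):=e^{\frac{2\pi b}{kz}}z^{\frac52}\int_{-\sqrt b}^{\sqrt b}e^{-\frac{2\pi u^2}{kz}}f_{k,g}(u)\,du\ \ (b>0), \] and $h_{g,k}:=k^2/g^2$ if $g\ne0$, $h_{g,k}:=1$ if $g=0$. Then: (1) if $b\le0$, then $|\mathcal{I}_{k,g,b}(z)|\ll |z|^{\frac52}h_{g,k}$; (2) if $b>0$, then $\mathcal{I}_{k,g,b}(z)=\mathcal{J}_{k,g,b}(z)+\mathcal{E}_{k,g,b}(z)$ where $|\mathcal{E}_{k,g,b}(z)|\ll|z|^{\frac52}h_{g,k}$; with implied constants independent of $k$, $g$ and $z$.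
   Context: For $k\in\mathbb{N}$, $g\in\mathbb{Z}$, $u\in\mathbb{R}$: $f_{k,g}(u):=\frac{\pi^2}{\sinh^2\left(\frac{\pi u}{k}-\frac{\pi i g}{2k}\right)}$ if $g\not\equiv0\pmod{2k}$, and $f_{k,g}(u):=\frac{\pi^2}{\sinh^2(\pi u/k)}-\frac{k^2}{u^2}$ if $g\equiv0\pmod{2k}$. $z^{5/2}$ denotes the principal branch. *)

(* Defs.v *)
From Stdlib Require Import Reals ZArith.
From Coquelicot Require Import Coquelicot.

Open Scope R_scope.

Definition Cexp (w : C) : C :=
  (exp (Re w) * cos (Im w), exp (Re w) * sin (Im w)).

Definition Csinh (w : C) : C := ((Cexp w - Cexp (- w)) / RtoC 2)%C.

(* principal argument in (-pi, pi] *)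
Definition Carg (w : C) : R :=
  let x := Re w in let y := Im w in
  if Rlt_dec 0 x then atan (y / x)
  else if Rlt_dec x 0 then
    (if Rle_dec 0 y then atan (y / x) + PI else atan (y / x) - PI)
  else if Rlt_dec 0 y then PI / 2
  else if Rlt_dec y 0 then - (PI / 2) else 0.

Definition Clog (w : C) : C := (ln (Cmod w), Carg w).
Definition Cpow52 (w : C) : C := Cexp (RtoC (5 / 2) * Clog w)%C.

Definition Ci (y : R) : C := (0, y).

Definition f_kg (k : nat) (g : Z) (u : R) : C :=
  if (g mod (2 * Z.of_nat k) =? 0)%Z then
    RtoC (PI ^ 2 / (sinh (PI * u / INR k)) ^ 2 - (INR k) ^ 2 / u ^ 2)
  else
    (RtoC (PI ^ 2) /
     (Csinh (RtoC (PI * u / INR k) - Ci (PI * IZR g / (2 * INR k))%R)) ^ 2)%C.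

Definition integrand (k : nat) (g : Z) (z : C) (u : R) : C :=
  (Cexp (- (RtoC (2 * PI * u ^ 2) / (RtoC (INR k) * z))) * f_kg k g u)%C.

Definition prefactor (k : nat) (b : R) (z : C) : C :=
  (Cexp (RtoC (2 * PI * b) / (RtoC (INR k) * z)) * Cpow52 z)%C.

Definition h_gk (g : Z) (k : nat) : R :=
  if (g =? 0)%Z then 1 else (INR k) ^ 2 / (IZR g) ^ 2.

(* Main.v *)
Require Import Defs.
From Stdlib Require Import Reals ZArith Lra Lia Psatz.
From Coquelicot Require Import Coquelicot.
Open Scope R_scope.

Lemma Cmod_Cexp w : Cmod (Cexp w) = exp (Re w).
Proof.
  unfold Cexp, Cmod; cbn [fst snd].
  replace ((exp (Re w) * cos (Im w)) ^ 2 + (exp (Re w) * sin (Im w)) ^ 2)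
    with (exp (Re w) ^ 2).
  - apply sqrt_pow2. left; apply exp_pos.
  - pose proof (sin2_cos2 (Im w)) as H. unfold Rsqr in H. nra.
Qed.

Lemma div_RtoC (a kk : R) (z : C) : kk <> 0 -> 0 < Re z ->
  (RtoC a / (RtoC kk * z) = RtoC (a / kk) * / z)%C.
Proof.
  intros Hk Hz. destruct z as [x y]. simpl in Hz.
  unfold Cdiv, Cmult, Cinv, RtoC; simpl.
  assert (0 < kk*kk) by (apply Rsqr_pos_lt in Hk; unfold Rsqr in Hk; exact Hk).
  assert (0 < kk*kk*(x*x)) by (apply Rmult_lt_0_compat; nra).
  f_equal; field; repeat split; try exact Hk; apply Rgt_not_eq; nra.
Qed.

Lemma Re_RtoC_mult c v : Re (RtoC c * v)%C = c * Re v.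
Proof. destruct v; simpl; ring. Qed.

Lemma Cmod_Cpow52 z : Cmod (Cpow52 z) = Rpower (Cmod z) (5/2).
Proof.
  unfold Cpow52. rewrite Cmod_Cexp. unfold Rpower, Clog. rewrite Re_RtoC_mult. reflexivity.
Qed.

Lemma incr0 (h dh : R -> R) (B : R) : (forall x, is_derive h x (dh x)) ->
  (forall x, 0 <= x <= B -> 0 <= dh x) -> forall x, 0 <= x <= B -> h 0 <= h x.
Proof.
  intros Hd Hpos x Hx. destruct (Req_dec x 0) as [->|Hx0]; [lra|].
  destruct (MVT_gen h 0 x dh) as [c [Hc Heq]].
  - intros; apply Hd.
  - intros y _; apply continuity_pt_filterlim; apply (ex_derive_continuous (V:=R_NormedModule)); eexists; apply Hd.
  - rewrite Rmin_left, Rmax_right in Hc by lra.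
    assert (0 <= dh c) by (apply Hpos; lra). nra.
Qed.

Lemma d_sinh x : is_derive sinh x (cosh x).
Proof. unfold sinh, cosh. auto_derive; [auto| field]. Qed.
Lemma d_cosh x : is_derive cosh x (sinh x).
Proof. unfold sinh, cosh. auto_derive; [auto| field]. Qed.

Ltac dtac := intros; unfold sinh, cosh; auto_derive; [auto | try field; try ring].

Lemma cosh_ge1 x : 1 <= cosh x.
Proof.
  unfold cosh. pose proof (exp_pos x). pose proof (exp_pos (-x)).
  assert (exp x * exp (-x) = 1) by (rewrite <- exp_plus; replace (x + - x) with 0 by ring; apply exp_0).
  set (a := exp x) in *. set (b := exp (-x)) in *.
  pose proof (pow2_ge_0 (a - b)).
  assert (4 <= (a + b)^2) by nra.
  assert (2 <= a + b) by nra. lra.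
Qed.

Lemma L1 x : 0 <= x -> x <= sinh x.
Proof.
  intros Hx. pose proof (incr0 (fun t => sinh t - t) (fun t => cosh t - 1) x) as H.
  cbv beta in H. rewrite sinh_0 in H.
  assert (0 - 0 <= sinh x - x); [|lra]. apply H; [dtac|intros; pose proof (cosh_ge1 x0); lra|lra].
Qed.

Lemma L2 x : 0 <= x -> 1 + x^2/2 <= cosh x.
Proof.
  intros Hx. pose proof (incr0 (fun t => cosh t - 1 - t^2/2) (fun t => sinh t - t) x) as H.
  cbv beta in H. rewrite cosh_0 in H.
  assert (1 - 1 - 0^2/2 <= cosh x - 1 - x^2/2); [|lra]. apply H; [dtac|intros; pose proof (L1 x0); lra|lra].
Qed.

Lemma L3 x : 0 <= x -> x + x^3/6 <= sinh x.
Proof.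
  intros Hx. pose proof (incr0 (fun t => sinh t - t - t^3/6) (fun t => cosh t - 1 - t^2/2) x) as H.
  cbv beta in H. rewrite sinh_0 in H.
  assert (0 - 0 - 0^3/6 <= sinh x - x - x^3/6); [|lra]. apply H; [dtac|intros; pose proof (L2 x0); lra|lra].
Qed.

Lemma U0 x : 0 <= x <= 1 -> cosh x <= 2.
Proof.
  intros Hx. unfold cosh.
  assert (exp x <= 3). { apply Rle_trans with (exp 1); [|apply exp_le_3].
    destruct (Req_dec x 1); [subst; lra|]. left; apply exp_increasing; lra. }
  assert (exp (-x) <= 1). { rewrite <- exp_0. destruct (Req_dec x 0); [subst; rewrite Ropp_0; lra|]. left; apply exp_increasing; lra. }
  lra.
Qed.

Lemma U1 x : 0 <= x <= 1 -> sinh x <= 2*x.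
Proof.
  intros Hx. pose proof (incr0 (fun t => 2*t - sinh t) (fun t => 2 - cosh t) 1) as H.
  cbv beta in H. rewrite sinh_0 in H.
  assert (2*0 - 0 <= 2*x - sinh x); [|lra]. apply H; [dtac|intros; pose proof (U0 x0); lra|lra].
Qed.

Lemma U2 x : 0 <= x <= 1 -> cosh x <= 1 + x^2.
Proof.
  intros Hx. pose proof (incr0 (fun t => 1 + t^2 - cosh t) (fun t => 2*t - sinh t) 1) as H.
  cbv beta in H. rewrite cosh_0 in H.
  assert (1 + 0^2 - 1 <= 1 + x^2 - cosh x); [|lra]. apply H; [dtac|intros; pose proof (U1 x0); lra|lra].
Qed.

Lemma U3 x : 0 <= x <= 1 -> sinh x <= x + x^3/3.
Proof.
  intros Hx. pose proof (incr0 (fun t => t + t^3/3 - sinh t) (fun t => 1 + t^2 - cosh t) 1) as H.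
  cbv beta in H. rewrite sinh_0 in H.
  assert (0 + 0^3/3 - 0 <= x + x^3/3 - sinh x); [|lra]. apply H; [dtac|intros; pose proof (U2 x0); lra|lra].
Qed.

Lemma U4 x : 0 <= x <= 1 -> cosh x <= 1 + x^2/2 + x^4/12.
Proof.
  intros Hx. pose proof (incr0 (fun t => 1 + t^2/2 + t^4/12 - cosh t) (fun t => t + t^3/3 - sinh t) 1) as H.
  cbv beta in H. rewrite cosh_0 in H.
  assert (1 + 0^2/2 + 0^4/12 - 1 <= 1 + x^2/2 + x^4/12 - cosh x); [|lra]. apply H; [dtac|intros; pose proof (U3 x0); lra|lra].
Qed.

Lemma U5 x : 0 <= x <= 1 -> sinh x <= x + x^3/6 + x^5/60.
Proof.
  intros Hx. pose proof (incr0 (fun t => t + t^3/6 + t^5/60 - sinh t) (fun t => 1 + t^2/2 + t^4/12 - cosh t) 1) as H.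
  cbv beta in H. rewrite sinh_0 in H.
  assert (0 + 0^3/6 + 0^5/60 - 0 <= x + x^3/6 + x^5/60 - sinh x); [|lra]. apply H; [dtac|intros; pose proof (U4 x0); lra|lra].
Qed.

Lemma S1 x : 0 <= x -> sin x <= x.
Proof.
  intros Hx. pose proof (incr0 (fun t => t - sin t) (fun t => 1 - cos t) x) as H.
  cbv beta in H. rewrite sin_0 in H.
  assert (0 - 0 <= x - sin x); [|lra]. apply H; [dtac|intros; pose proof (COS_bound x0); lra|lra].
Qed.

Lemma S2 x : 0 <= x -> 1 - x^2/2 <= cos x.
Proof.
  intros Hx. pose proof (incr0 (fun t => cos t - 1 + t^2/2) (fun t => t - sin t) x) as H.
  cbv beta in H. rewrite cos_0 in H.
  assert (1 - 1 + 0^2/2 <= cos x - 1 + x^2/2); [|lra]. apply H; [dtac|intros; pose proof (S1 x0); lra|lra].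
Qed.

Lemma S3 x : 0 <= x -> x - x^3/6 <= sin x.
Proof.
  intros Hx. pose proof (incr0 (fun t => sin t - t + t^3/6) (fun t => cos t - 1 + t^2/2) x) as H.
  cbv beta in H. rewrite sin_0 in H.
  assert (0 - 0 + 0^3/6 <= sin x - x + x^3/6); [|lra]. apply H; [dtac|intros; pose proof (S2 x0); lra|lra].
Qed.

Lemma atan_le_id x : 0 <= x -> atan x <= x.
Proof.
  intros Hx. pose proof (incr0 (fun t => t - atan t) (fun t => 1 - / (1 + t^2)) x) as H.
  cbv beta in H. rewrite atan_0 in H.
  assert (0 - 0 <= x - atan x); [|lra]. apply H.
  - intros t. apply (is_derive_minus (fun t => t) atan). 
    + apply (is_derive_id (K:=R_AbsRing)).
    + pose proof (is_derive_atan t). unfold Rsqr in H0. replace (t^2) with (t*t) by ring. exact H0.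
  - intros t Ht. assert (1 <= 1 + t^2) by nra. assert (/ (1 + t^2) <= 1).
    { rewrite <- Rinv_1. apply Rinv_le_contravar; lra. } lra.
  - lra.
Qed.

Lemma sinh_neg x : sinh (- x) = - sinh x.
Proof. unfold sinh. rewrite Ropp_involutive. field. Qed.

Definition phi (x : R) : R := / (sinh x)^2 - / x^2.

Lemma phi_even x : phi (- x) = phi x.
Proof. unfold phi. rewrite sinh_neg. replace ((- sinh x)^2) with ((sinh x)^2) by ring. replace ((-x)^2) with (x^2) by ring. reflexivity. Qed.

Lemma phi_pos_small x : 0 < x <= 1 -> 0 <= phi x + 1/3 <= x^2/3.
Proof.
  intros Hx. pose proof (L3 x ltac:(lra)). pose proof (U5 x ltac:(lra)).
  set (s := sinh x) in *.
  assert (Hs : x <= s) by nra.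
  set (N := 3*x^2 - (3 - x^2)*s^2).
  assert (Heq : phi x + 1/3 = N / (3*x^2*s^2)).
  { unfold phi, N. fold s. field. split; lra. }
  set (U := x + x^3/6 + x^5/60) in *. set (L := x + x^3/6) in *.
  assert (HL : 0 <= L) by (unfold L; nra).
  assert (L^2 <= s^2) by (apply pow_incr; lra).
  assert (s^2 <= U^2) by (apply pow_incr; lra).
  assert (3 - x^2 > 0) by nra.
  assert (N <= 3*x^2 - (3-x^2)*L^2) by (unfold N; nra).
  assert (3*x^2 - (3-x^2)*U^2 <= N) by (unfold N; nra).
  assert (E1 : 3*x^2 - (3-x^2)*L^2 = x^6/4 + x^8/36) by (unfold L; field).
  assert (E2 : 3*x^2 - (3-x^2)*U^2 = x^6*(3/20 + x^2*(2/45) + x^4*(1/180 - 1/1200) + x^6/3600)) by (unfold U, L; field).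
  assert (P0 : 0 <= x^6*(3/20 + x^2*(2/45) + x^4*(1/180 - 1/1200) + x^6/3600)).
  { apply Rmult_le_pos. apply pow_le; lra. pose proof (pow2_ge_0 x). pose proof (pow_le x 4). pose proof (pow_le x 6). nra. }
  assert (x^2 <= 1) by nra.
  assert (x^8 <= x^6) by (pose proof (pow_le x 6 ltac:(lra)); replace (x^8) with (x^6*x^2) by ring; nra).
  assert (0 <= N <= x^6) by nra.
  rewrite Heq. assert (0 < 3*x^2*s^2) by (pose proof (pow_lt x 2); pose proof (pow_lt s 2); nra).
  split. apply Rmult_le_pos; [lra| left; apply Rinv_0_lt_compat; lra].
  apply Rle_trans with (x^6 / (3*x^2*s^2)).
  { apply Rmult_le_compat_r; [left; apply Rinv_0_lt_compat; lra| lra]. }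
  assert (x^2 <= s^2) by nra.
  unfold Rdiv. apply Rle_trans with (x^6 * / (3*x^2*x^2)).
  { apply Rmult_le_compat_l. apply pow_le; lra. apply Rinv_le_contravar. pose proof (pow_lt x 2); nra. nra. }
  right. field. lra.
Qed.

Lemma Rball_of (x y e : R) : Rabs (y - x) < e -> ball x e y.
Proof. intros H. apply (norm_compat1 (V:=R_NormedModule)). exact H. Qed.

Lemma Rball_to (x y : R) (e : posreal) : ball x e y -> Rabs (y - x) < e.
Proof. intros H. pose proof (AbsRing_norm_compat2 R_AbsRing x y e H). simpl in H0. 
  unfold abs, minus, plus, opp in H0; simpl in H0. replace (y - x) with (y + - x) by ring. lra. Qed.

Lemma absle x a : Rabs x <= a -> - a <= x <= a.
Proof. unfold Rabs; destruct Rcase_abs; lra. Qed.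

Lemma phi_small x : x <> 0 -> Rabs x <= 1 -> Rabs (phi x + 1/3) <= x^2/3.
Proof.
  intros H0 H1. destruct (Rle_or_lt 0 x).
  - pose proof (phi_pos_small x ltac:(split; [lra| apply absle in H1; lra])). rewrite Rabs_right; lra.
  - rewrite <- phi_even. rewrite Rabs_left in H1 by lra.
    pose proof (phi_pos_small (-x) ltac:(lra)). rewrite Rabs_right by lra.
    replace ((-x)^2) with (x^2) in H2 by ring. lra.
Qed.

Lemma phi_pos_big x : 1 <= x -> - 1 <= phi x <= 0.
Proof.
  intros Hx. pose proof (L1 x ltac:(lra)). unfold phi.
  assert (x^2 <= (sinh x)^2) by (apply pow_incr; lra).
  assert (1 <= x^2) by nra.
  assert (/ (sinh x)^2 <= / x^2) by (apply Rinv_le_contravar; lra).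
  assert (0 < / (sinh x)^2) by (apply Rinv_0_lt_compat; lra).
  assert (/ x^2 <= 1) by (rewrite <- Rinv_1; apply Rinv_le_contravar; lra).
  lra.
Qed.

Lemma phi_bound x : x <> 0 -> Rabs (phi x) <= 1.
Proof.
  intros H0. destruct (Rle_or_lt (Rabs x) 1).
  - pose proof (phi_small x H0 H). assert (x^2 <= 1).
    { apply absle in H. nra. }
    apply absle in H1. apply Rabs_le. lra.
  - destruct (Rle_or_lt 0 x).
    + rewrite Rabs_right in H by lra. pose proof (phi_pos_big x ltac:(lra)). apply Rabs_le; lra.
    + rewrite Rabs_left in H by lra. rewrite <- phi_even. pose proof (phi_pos_big (-x) ltac:(lra)). apply Rabs_le; lra.
Qed.

Definition phie (x : R) : R := if Req_EM_T x 0 then - (1/3) else phi x.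

Lemma sinh_ne0 x : x <> 0 -> sinh x <> 0.
Proof.
  intros H. destruct (Rlt_or_le 0 x).
  - pose proof (L1 x ltac:(lra)). lra.
  - pose proof (L1 (-x) ltac:(lra)). rewrite sinh_neg in H1. lra.
Qed.

Lemma phi_cont x : x <> 0 -> continuous phi x.
Proof.
  intros H. apply (ex_derive_continuous (V:=R_NormedModule)).
  pose proof (sinh_ne0 x H) as Hs. unfold phi, sinh in *.
  auto_derive. repeat split; auto; apply pow_nonzero; auto.
Qed.

Lemma phie_cont x : continuous phie x.
Proof.
  destruct (Req_dec x 0) as [->|Hx].
  - apply filterlim_locally. intros eps.
    assert (Hd : 0 < Rmin 1 eps) by (apply Rmin_pos; [lra| apply cond_pos]).
    exists (mkposreal _ Hd). intros y Hy. apply Rball_to in Hy. simpl in Hy.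
    apply Rball_of. unfold phie. destruct (Req_EM_T 0 0); [|congruence].
    destruct (Req_EM_T y 0).
    + replace (- (1/3) - - (1/3)) with 0 by ring. rewrite Rabs_R0. apply cond_pos.
    + rewrite Rminus_0_r in Hy. 
      assert (Rabs y <= 1) by (pose proof (Rmin_l 1 eps); lra).
      pose proof (phi_small y n H).
      replace (phi y - - (1/3)) with (phi y + 1/3) by ring.
      apply absle in H. assert (y^2/3 <= Rabs y).
      { unfold Rabs; destruct Rcase_abs; nra. }
      pose proof (Rmin_r 1 eps). lra.
  - apply (continuous_ext_loc _ phi).
    + assert (Hd : 0 < Rabs x) by (apply Rabs_pos_lt; auto).
      exists (mkposreal _ Hd). intros y Hy. apply Rball_to in Hy. simpl in Hy.
      unfold phie. destruct (Req_EM_T y 0); auto. subst. rewrite Rminus_0_l, Rabs_Ropp in Hy. lra.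
    + apply phi_cont; auto.
Qed.

Section CC.
Variable x : R.

Lemma cR_mult (f g : R -> R) : continuous f x -> continuous g x -> continuous (fun t => f t * g t) x.
Proof. intros; apply (continuous_mult (K:=R_AbsRing)); auto. Qed.
Lemma cR_plus (f g : R -> R) : continuous f x -> continuous g x -> continuous (fun t => f t + g t) x.
Proof. intros; apply (continuous_plus (V:=R_NormedModule)); auto. Qed.
Lemma cR_opp (f : R -> R) : continuous f x -> continuous (fun t => - f t) x.
Proof. intros; apply (continuous_opp (V:=R_NormedModule)); auto. Qed.
Lemma cR_minus (f g : R -> R) : continuous f x -> continuous g x -> continuous (fun t => f t - g t) x.
Proof. intros; apply cR_plus; auto; apply cR_opp; auto. Qed.
Lemma cR_exp (f : R -> R) : continuous f x -> continuous (fun t => exp (f t)) x.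
Proof. intros; apply (continuous_comp f exp); auto. apply (ex_derive_continuous (V:=R_NormedModule)). auto_derive; auto. Qed.
Lemma cR_cos (f : R -> R) : continuous f x -> continuous (fun t => cos (f t)) x.
Proof. intros; apply (continuous_comp f cos); auto. apply (ex_derive_continuous (V:=R_NormedModule)). auto_derive; auto. Qed.
Lemma cR_sin (f : R -> R) : continuous f x -> continuous (fun t => sin (f t)) x.
Proof. intros; apply (continuous_comp f sin); auto. apply (ex_derive_continuous (V:=R_NormedModule)). auto_derive; auto. Qed.
Lemma cR_inv (f : R -> R) : f x <> 0 -> continuous f x -> continuous (fun t => / (f t)) x.
Proof. intros; apply (continuous_comp f Rinv); auto. apply (ex_derive_continuous (V:=R_NormedModule)). auto_derive; auto. Qed.
Lemma cR_phie (f : R -> R) : continuous f x -> continuous (fun t => phie (f t)) x.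
Proof. intros; apply (continuous_comp f phie); auto. apply phie_cont. Qed.

Lemma cC_of (f : R -> C) : continuous (fun t => Re (f t)) x -> continuous (fun t => Im (f t)) x -> continuous f x.
Proof.
  intros H1 H2.
  apply (continuous_ext (fun t => (Re (f t), Im (f t)))).
  { intros t. destruct (f t); reflexivity. }
  apply (continuous_comp_2 (fun t => Re (f t)) (fun t => Im (f t)) (fun a b => (a, b))); auto.
  apply (continuous_ext (fun y => y)). { intros [a b]; reflexivity. } apply continuous_id.
Qed.

Lemma cRe (f : R -> C) : continuous f x -> continuous (fun t => Re (f t)) x.
Proof.
  intros H. apply (continuous_comp f fst); auto. destruct (f x). apply continuous_fst.
Qed.
Lemma cIm (f : R -> C) : continuous f x -> continuous (fun t => Im (f t)) x.
Proof.
  intros H. apply (continuous_comp f snd); auto. destruct (f x). apply continuous_snd.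
Qed.
End CC.

Section CC2.
Variable x : R.
Lemma cC_mult (f g : R -> C) : continuous f x -> continuous g x -> continuous (fun t => (f t * g t)%C) x.
Proof.
  intros Hf Hg. apply cC_of.
  - apply (continuous_ext (fun t => Re (f t) * Re (g t) - Im (f t) * Im (g t))).
    { intros t; destruct (f t), (g t); reflexivity. }
    apply cR_minus; apply cR_mult; first [apply cRe | apply cIm]; auto.
  - apply (continuous_ext (fun t => Re (f t) * Im (g t) + Im (f t) * Re (g t))).
    { intros t; destruct (f t), (g t); reflexivity. }
    apply cR_plus; apply cR_mult; first [apply cRe | apply cIm]; auto.
Qed.
Lemma cC_plus (f g : R -> C) : continuous f x -> continuous g x -> continuous (fun t => (f t + g t)%C) x.
Proof.
  intros Hf Hg. apply cC_of.
  - apply (continuous_ext (fun t => Re (f t) + Re (g t))). { intros t; destruct (f t), (g t); reflexivity. }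
    apply cR_plus; apply cRe; auto.
  - apply (continuous_ext (fun t => Im (f t) + Im (g t))). { intros t; destruct (f t), (g t); reflexivity. }
    apply cR_plus; apply cIm; auto.
Qed.
Lemma cC_opp (f : R -> C) : continuous f x -> continuous (fun t => (- f t)%C) x.
Proof.
  intros Hf. apply cC_of.
  - apply (continuous_ext (fun t => - Re (f t))). { intros t; destruct (f t); reflexivity. }
    apply cR_opp; apply cRe; auto.
  - apply (continuous_ext (fun t => - Im (f t))). { intros t; destruct (f t); reflexivity. }
    apply cR_opp; apply cIm; auto.
Qed.
Lemma cC_minus (f g : R -> C) : continuous f x -> continuous g x -> continuous (fun t => (f t - g t)%C) x.
Proof. intros; apply cC_plus; auto; apply cC_opp; auto. Qed.
Lemma cC_RtoC (h : R -> R) : continuous h x -> continuous (fun t => RtoC (h t)) x.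
Proof.
  intros H. apply cC_of.
  - apply (continuous_ext h); [reflexivity|auto].
  - apply (continuous_ext (fun _ => 0)); [reflexivity| apply continuous_const].
Qed.
Lemma cC_const (c : C) : continuous (fun _ : R => c) x.
Proof. apply continuous_const. Qed.
Lemma cC_exp (f : R -> C) : continuous f x -> continuous (fun t => Cexp (f t)) x.
Proof.
  intros Hf. apply cC_of.
  - apply (continuous_ext (fun t => exp (Re (f t)) * cos (Im (f t)))); [reflexivity|].
    apply cR_mult; [apply cR_exp|apply cR_cos]; first [apply cRe | apply cIm]; auto.
  - apply (continuous_ext (fun t => exp (Re (f t)) * sin (Im (f t)))); [reflexivity|].
    apply cR_mult; [apply cR_exp|apply cR_sin]; first [apply cRe | apply cIm]; auto.
Qed.
Lemma cC_inv (f : R -> C) : f x <> 0%C -> continuous f x -> continuous (fun t => (/ f t)%C) x.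
Proof.
  intros H0 Hf.
  assert (Hn : Re (f x) * Re (f x) + Im (f x) * Im (f x) <> 0).
  { intros E. apply H0. destruct (f x) as [a b]. simpl in E. 
    assert (a = 0) by nra. assert (b = 0) by nra. subst; reflexivity. }
  apply cC_of.
  - apply (continuous_ext (fun t => Re (f t) * / (Re (f t) * Re (f t) + Im (f t) * Im (f t)))).
    { intros t; destruct (f t) as [a b]; unfold Cinv; simpl. unfold Rdiv. f_equal; f_equal; ring. }
    apply cR_mult. apply cRe; auto. apply cR_inv. auto.
    apply cR_plus; apply cR_mult; first [apply cRe | apply cIm]; auto.
  - apply (continuous_ext (fun t => - Im (f t) * / (Re (f t) * Re (f t) + Im (f t) * Im (f t)))).
    { intros t; destruct (f t) as [a b]; unfold Cinv; simpl. unfold Rdiv. f_equal; f_equal; ring. }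
    apply cR_mult. apply cR_opp, cIm; auto. apply cR_inv. auto.
    apply cR_plus; apply cR_mult; first [apply cRe | apply cIm]; auto.
Qed.
End CC2.

Notation RIntC := (@RInt C_R_CompleteNormedModule).

Definition D (u : R) : R := / (1 + u²).

Lemma D_pos u : 0 < D u.
Proof. unfold D, Rsqr. apply Rinv_0_lt_compat. nra. Qed.

Lemma exp_le_D u : exp (- (PI * u^2)) <= D u.
Proof.
  unfold D, Rsqr. rewrite exp_Ropp. apply Rinv_le_contravar. nra.
  pose proof (exp_ineq1_le (PI * u^2)). pose proof PI2_1. pose proof (pow2_ge_0 u). nra.
Qed.

Lemma exp_alpha_le (al u : R) : PI <= al -> exp (- (al * u^2)) <= D u.
Proof.
  intros H. eapply Rle_trans; [|apply exp_le_D].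
  destruct (Req_dec al PI); [subst; lra|].
  destruct (Req_dec u 0). { subst. right. f_equal. ring. }
  left. apply exp_increasing.
  assert (0 < u^2). { apply Rsqr_pos_lt in H1. unfold Rsqr in H1. nra. }
  nra.
Qed.

Lemma exp_alpha_tail (al u b : R) : PI <= al -> b <= u^2 ->
  exp (- (al * u^2)) <= exp (- (al * b)) * exp (PI * b) * D u.
Proof.
  intros H Hb. eapply Rle_trans with (exp (- (al*b)) * exp (PI*b) * exp (- (PI * u^2))).
  - rewrite <- !exp_plus. destruct (Req_dec (-(al*u^2)) (- (al * b) + PI * b + - (PI * u ^ 2))) as [E|E].
    + rewrite E; lra.
    + left. apply exp_increasing. nra.
  - apply Rmult_le_compat_l. left; apply Rmult_lt_0_compat; apply exp_pos. apply exp_le_D.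
Qed.

Lemma is_RInt_D (K x y : R) : is_RInt (fun u => K * D u) x y (K * (atan y - atan x)).
Proof.
  replace (K * (atan y - atan x)) with (minus (K * atan y) (K * atan x)).
  2: { unfold minus, plus, opp; simpl. ring. }
  apply (is_RInt_derive (fun u => K * atan u) (fun u => K * D u)).
  - intros t _. unfold D. auto_derive; auto. unfold Rsqr. field. nra.
  - intros t _. apply (ex_derive_continuous (V:=R_NormedModule)). unfold D, Rsqr. auto_derive. nra.
Qed.

Lemma RInt_bound (F : R -> C) (x y K : R) : (forall a b, ex_RInt F a b) -> 0 <= K ->
  (forall u, Rmin x y <= u <= Rmax x y -> Cmod (F u) <= K * D u) ->
  Cmod (RIntC F x y) <= K * Rabs (atan y - atan x).
Proof.
  intros Hex HK Hb. rewrite Cmod_norm. destruct (Rle_or_lt x y).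
  - assert (atan x <= atan y).
    { destruct (Req_dec x y); [subst; lra|]. left; apply atan_increasing; lra. }
    rewrite Rabs_right by lra.
    apply (norm_RInt_le (V:=C_R_CompleteNormedModule) F (fun u => K * D u) x y); auto.
    + intros u Hu. rewrite <- Cmod_norm. apply Hb. rewrite Rmin_left, Rmax_right; lra.
    + apply RInt_correct; auto.
    + apply is_RInt_D.
  - assert (atan y < atan x) by (apply atan_increasing; lra).
    rewrite Rabs_left by lra.
    rewrite <- (opp_RInt_swap (V:=C_R_CompleteNormedModule)) by auto. rewrite (norm_opp (V:=C_R_CompleteNormedModule)).
    replace (K * - (atan y - atan x)) with (K * (atan x - atan y)) by ring.
    apply (norm_RInt_le (V:=C_R_CompleteNormedModule) F (fun u => K * D u) y x); auto. lra.
    + intros u Hu. rewrite <- Cmod_norm. apply Hb. rewrite Rmin_right, Rmax_left; lra.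
    + apply RInt_correct; auto.
    + apply is_RInt_D.
Qed.

Lemma atan_tail (N a : R) : 0 < N -> N <= a -> PI/2 - atan a <= / N.
Proof.
  intros HN Ha. rewrite <- atan_inv by lra.
  apply Rle_trans with (atan (/ N)).
  - destruct (Req_dec N a); [subst; lra|]. left; apply atan_increasing.
    apply Rinv_lt_contravar; nra.
  - apply atan_le_id. left; apply Rinv_0_lt_compat; lra.
Qed.

Lemma closed_bound {T} (FF : (T -> Prop) -> Prop) (HF : ProperFilter FF)
  (h : T -> C) (y c : C) (B : R) :
  filterlim h FF (locally y) -> FF (fun t => Cmod (h t - c) <= B) -> Cmod (y - c) <= B.
Proof.
  intros Hl Hb. destruct (Rle_or_lt (Cmod (y - c)) B) as [|Hlt]; auto. exfalso.
  pose proof (@norm_factor_gt_0 R_AbsRing (prod_NormedModule R_AbsRing R_NormedModule R_NormedModule)) as Hnf.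
  set (nf := @norm_factor R_AbsRing (prod_NormedModule R_AbsRing R_NormedModule R_NormedModule)) in *.
  assert (He : 0 < (Cmod (y - c) - B) / nf) by (apply Rdiv_lt_0_compat; lra).
  pose proof (proj1 (filterlim_locally h y) Hl (mkposreal _ He)) as Hball.
  destruct (@filter_ex _ FF HF _ (filter_and _ _ Hb Hball)) as [t [H1 H2]].
  apply (norm_compat2 (V:=prod_NormedModule R_AbsRing R_NormedModule R_NormedModule)) in H2. simpl in H2. fold nf in H2.
  replace (nf * ((Cmod (y - c) - B) / nf)) with (Cmod (y - c) - B) in H2 by (field; lra).
  rewrite <- Cmod_norm in H2.
  change (minus (h t) y) with (h t - y)%C in H2.
  assert (Cmod (y - c) <= Cmod (h t - c) + Cmod (h t - y)%C).
  { replace (y - c)%C with ((h t - c) + (- (h t - y)))%C.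
    - eapply Rle_trans; [apply Cmod_triangle|]. rewrite Cmod_opp. lra.
    - destruct (h t), y, c. unfold minus, plus, opp; simpl. unfold prod_plus, prod_opp, Cminus, Cplus, Copp; simpl.
      f_equal; unfold plus, opp; simpl; ring. }
  lra.
Qed.

Lemma C_alg1 (A X E : C) : ((A + (X + E)) - X = A + E)%C.
Proof. destruct A, X, E. unfold Cminus, Cplus, Copp; simpl. f_equal; ring. Qed.

Lemma Chasles3 (F : R -> C) (a b c : R) : (forall x y, ex_RInt F x y) ->
  RIntC F a c = (RIntC F a b + RIntC F b c)%C.
Proof. intros H. rewrite <- (RInt_Chasles (V:=C_R_CompleteNormedModule) F a b c); auto. Qed.

Lemma atan_close (N a a' : R) : 0 < N -> N < a -> N < a' -> Rabs (atan a' - atan a) <= / N.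
Proof.
  intros HN Ha Ha'. pose proof (atan_tail N a HN ltac:(lra)). pose proof (atan_tail N a' HN ltac:(lra)).
  pose proof (atan_tail N N HN ltac:(lra)).
  assert (atan N <= atan a) by (left; apply atan_increasing; lra).
  assert (atan N <= atan a') by (left; apply atan_increasing; lra).
  pose proof (atan_bound a). pose proof (atan_bound a').
  apply Rabs_le. lra.
Qed.

Lemma gen (F : R -> C) (M al : R) : 0 <= M -> PI <= al -> (forall a b, ex_RInt F a b) ->
 (forall u, Cmod (F u) <= M * exp (- (al * u^2))) ->
 exists I, is_RInt_gen F (Rbar_locally m_infty) (Rbar_locally p_infty) I /\
   Cmod I <= M * PI /\
   (forall b, 0 < b -> Cmod (I - RIntC F (- sqrt b) (sqrt b)) <= M * exp (-(al*b)) * exp (PI*b) * PI).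
Proof.
  intros HM Hal Hex HF.
  set (FF := filter_prod (Rbar_locally m_infty) (Rbar_locally p_infty)).
  assert (HFF : ProperFilter FF) by (apply filter_prod_proper; apply Rbar_locally_filter).
  set (If := fun ab : R*R => RIntC F (fst ab) (snd ab)).
  assert (Hb1 : forall x y, Cmod (RIntC F x y) <= M * Rabs (atan y - atan x)).
  { intros x y. apply RInt_bound; auto. intros u _. eapply Rle_trans; [apply HF|].
    apply Rmult_le_compat_l; auto. apply exp_alpha_le; auto. }
  assert (HC : exists I, filterlim If FF (locally I)).
  { apply (filterlim_locally_cauchy (U:=C_R_CompleteNormedModule) If).
    intros eps. set (N := (2*M+1)/eps).
    assert (HN : 0 < N) by (apply Rdiv_lt_0_compat; [lra| apply cond_pos]).
    exists (fun ab => fst ab < -N /\ N < snd ab). split.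
    - apply Filter_prod with (fun a => a < -N) (fun b => N < b); [exists (-N); auto | exists N; auto | ].
      intros x y Hx Hy; simpl; auto.
    - intros [a b] [a' b'] [Ha Hb] [Ha' Hb']; simpl in *.
      apply (norm_compat1 (V:=C_R_CompleteNormedModule)).
      change (minus (If (a', b')) (If (a, b))) with (If (a', b') - If (a, b))%C.
      rewrite <- Cmod_norm. unfold If; simpl.
      rewrite (Chasles3 F a' a b') by auto. rewrite (Chasles3 F a b b') by auto.
      rewrite C_alg1. eapply Rle_lt_trans; [apply Cmod_triangle|].
      pose proof (Hb1 a' a). pose proof (Hb1 b b').
      assert (Rabs (atan a - atan a') <= / N).
      { pose proof (atan_close N (-a') (-a) HN ltac:(lra) ltac:(lra)) as Hc.
        rewrite !atan_opp in Hc. replace (- atan a - - atan a') with (- (atan a - atan a')) in Hc by ring.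
        rewrite Rabs_Ropp in Hc. exact Hc. }
      assert (Rabs (atan b' - atan b) <= / N) by (apply atan_close; lra).
      assert (M * / N * 2 < eps).
      { pose proof (cond_pos eps) as He.
        replace (M * / N * 2) with (eps * (2*M) / (2*M+1)) by (unfold N; field; split; lra).
        unfold Rdiv. apply Rmult_lt_reg_r with (2*M+1). lra.
        rewrite Rmult_assoc, Rinv_l, Rmult_1_r by lra. nra. }
      assert (M * Rabs (atan a - atan a') <= M * / N) by (apply Rmult_le_compat_l; auto).
      assert (M * Rabs (atan b' - atan b) <= M * / N) by (apply Rmult_le_compat_l; auto).
      lra. }
  destruct HC as [I HI]. exists I. split; [|split].
  - unfold is_RInt_gen, filterlimi, filter_le, filtermapi. intros P HP.
    assert (HI' : FF (fun ab => P (If ab))) by (apply HI; exact HP). revert HI'. apply filter_imp. intros [a b] HPab.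
    exists (If (a,b)). split; [apply (RInt_correct (V:=C_R_CompleteNormedModule)); auto | exact HPab].
  - replace (Cmod I) with (Cmod (I - 0)%C) by (f_equal; destruct I; unfold Cminus, Cplus, Copp; simpl; f_equal; ring).
    apply (closed_bound FF HFF If I 0 (M*PI) HI).
    apply filter_forall. intros [a b]. unfold If; simpl.
    replace (RIntC F a b - 0)%C with (RIntC F a b) by (destruct (RIntC F a b); unfold Cminus, Cplus, Copp; simpl; f_equal; ring).
    eapply Rle_trans; [apply Hb1|]. apply Rmult_le_compat_l; auto.
    pose proof (atan_bound a); pose proof (atan_bound b). apply Rabs_le. lra.
  - intros b Hb. set (s := sqrt b). assert (Hs : 0 < s) by (apply sqrt_lt_R0; auto).
    assert (Hs2 : s * s = b) by (apply sqrt_sqrt; lra).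
    set (K := M * exp (-(al*b)) * exp (PI*b)).
    assert (HK : 0 <= K) by (unfold K; apply Rmult_le_pos; [apply Rmult_le_pos; [auto| left; apply exp_pos] | left; apply exp_pos]).
    assert (Hpt : forall u, b <= u^2 -> Cmod (F u) <= K * D u).
    { intros u Hu. eapply Rle_trans; [apply HF|]. unfold K. rewrite !Rmult_assoc. apply Rmult_le_compat_l; auto.
      rewrite <- Rmult_assoc. apply exp_alpha_tail; auto. }
    apply (closed_bound FF HFF If I _ (K*PI) HI).
    apply Filter_prod with (fun a => a < -s) (fun bb => s < bb); [exists (-s); auto | exists s; auto | ].
    intros a bb Ha Hbb. unfold If; simpl.
    rewrite (Chasles3 F a (-s) bb) by auto. rewrite (Chasles3 F (-s) s bb) by auto.
    rewrite Cplus_assoc. 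
    replace (RIntC F a (- s) + RIntC F (- s) s + RIntC F s bb - RIntC F (- s) s)%C
      with (RIntC F a (- s) + RIntC F s bb)%C
      by (destruct (RIntC F a (- s)), (RIntC F (- s) s), (RIntC F s bb); unfold Cminus, Cplus, Copp; simpl; f_equal; ring).
    eapply Rle_trans; [apply Cmod_triangle|].
    assert (H1 : Cmod (RIntC F a (-s)) <= K * Rabs (atan (-s) - atan a)).
    { apply RInt_bound; auto. intros u Hu. apply Hpt. rewrite Rmin_left, Rmax_right in Hu by lra. nra. }
    assert (H2 : Cmod (RIntC F s bb) <= K * Rabs (atan bb - atan s)).
    { apply RInt_bound; auto. intros u Hu. apply Hpt. rewrite Rmin_left, Rmax_right in Hu by lra. nra. }
    assert (atan a < atan (-s)) by (apply atan_increasing; lra).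
    assert (atan s < atan bb) by (apply atan_increasing; lra).
    assert (0 < atan s) by (rewrite <- atan_0; apply atan_increasing; lra).
    rewrite atan_opp in *. rewrite Rabs_right in H1, H2 by lra.
    pose proof (atan_bound a); pose proof (atan_bound bb).
    assert (K * (- atan s - atan a) + K * (atan bb - atan s) <= K * PI).
    { rewrite <- Rmult_plus_distr_l. apply Rmult_le_compat_l; auto. lra. }
    lra.
Qed.

Lemma Re_opp w : Re (- w)%C = - Re w.
Proof. destruct w; reflexivity. Qed.

Lemma integrand_mod k g z u : (1 <= k)%nat -> 0 < Re z ->
  Cmod (integrand k g z u) = exp (- (2 * PI * Re (/ z) / INR k * u^2)) * Cmod (f_kg k g u).
Proof.
  intros Hk Hz. assert (INR k <> 0) by (apply not_0_INR; lia).
  unfold integrand. rewrite Cmod_mult, Cmod_Cexp. f_equal. f_equal.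
  rewrite div_RtoC by auto. rewrite Re_opp, Re_RtoC_mult. field. auto.
Qed.

Lemma prefactor_mod k b z : (1 <= k)%nat -> 0 < Re z ->
  Cmod (prefactor k b z) = exp (2 * PI * Re (/ z) / INR k * b) * Rpower (Cmod z) (5/2).
Proof.
  intros Hk Hz. assert (INR k <> 0) by (apply not_0_INR; lia).
  unfold prefactor. rewrite Cmod_mult, Cmod_Cexp, Cmod_Cpow52. f_equal. f_equal.
  rewrite div_RtoC by auto. rewrite Re_RtoC_mult. field. auto.
Qed.

Lemma Csinh_eq a b : Csinh (a, b) = (sinh a * cos b, cosh a * sin b).
Proof.
  unfold Csinh, Cexp, Cdiv, Cminus, Cplus, Copp, Cinv, Cmult, RtoC; simpl.
  rewrite cos_neg, sin_neg. unfold sinh, cosh. f_equal; field.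
Qed.

Lemma cosh_sinh a : cosh a ^ 2 = 1 + sinh a ^ 2.
Proof.
  unfold sinh, cosh.
  assert (exp a * exp (-a) = 1) by (rewrite <- exp_plus; replace (a + - a) with 0 by ring; apply exp_0).
  nra.
Qed.

Lemma Csinh_mod2 a b : Cmod (Csinh (a, b)) ^ 2 = sinh a ^ 2 + sin b ^ 2.
Proof.
  rewrite Csinh_eq. unfold Cmod; cbn [fst snd]. rewrite pow2_sqrt.
  - pose proof (cosh_sinh a). pose proof (sin2_cos2 b). unfold Rsqr in H0. nra.
  - pose proof (pow2_ge_0 (sinh a * cos b)). pose proof (pow2_ge_0 (cosh a * sin b)). lra.
Qed.

Lemma sin_sq_lb t : Rabs t <= 2 -> t^2 / 9 <= sin t ^ 2.
Proof.
  intros Ht. destruct (Rle_or_lt 0 t).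
  - rewrite Rabs_right in Ht by lra. pose proof (S3 t H).
    assert (t / 3 <= sin t) by nra. assert (0 <= t/3) by lra.
    assert ((t/3)^2 <= sin t ^2) by (apply pow_incr; lra). lra.
  - rewrite Rabs_left in Ht by lra. pose proof (S3 (-t) ltac:(lra)). rewrite sin_neg in H0.
    assert (-t / 3 <= - sin t) by nra. assert (0 <= -t/3) by lra.
    assert ((-t/3)^2 <= (- sin t) ^2) by (apply pow_incr; lra). 
    replace ((- sin t)^2) with (sin t ^2) in H3 by ring. lra.
Qed.

Lemma mod_nz k g : (1 <= k)%nat -> (- Z.of_nat k < g <= Z.of_nat k)%Z -> g <> 0%Z ->
  (g mod (2 * Z.of_nat k) =? 0)%Z = false.
Proof.
  intros Hk Hg H0. apply Z.eqb_neq. intro Hm. apply Z.mod_divide in Hm; [|lia].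
  destruct Hm as [q Hq]. destruct (Z.lt_trichotomy q 0) as [Hq0|[Hq0|Hq0]]; [nia|subst; lia|nia].
Qed.

Lemma absg k g : (- Z.of_nat k < g <= Z.of_nat k)%Z -> Rabs (IZR g) <= INR k.
Proof.
  intros Hg. rewrite INR_IZR_INZ. apply Rabs_le. split.
  - rewrite <- opp_IZR. apply IZR_le. lia.
  - apply IZR_le. lia.
Qed.

Lemma Ci_eq x t : (RtoC x - Defs.Ci t)%C = (x, - t).
Proof. unfold Cminus, Cplus, Copp, Ci, RtoC; simpl. f_equal; ring. Qed.

Lemma Smod_lb k g u : (1 <= k)%nat -> (- Z.of_nat k < g <= Z.of_nat k)%Z ->
  (PI * IZR g / (2 * INR k))^2 / 9 <= Cmod (Csinh (RtoC (PI * u / INR k) - Defs.Ci (PI * IZR g / (2 * INR k)))) ^ 2.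
Proof.
  intros Hk Hg. rewrite Ci_eq, Csinh_mod2, sin_neg.
  assert (Hk1 : 1 <= INR k) by (apply (le_INR 1); lia).
  pose proof (absg k g Hg). pose proof PI_4. pose proof PI_RGT_0.
  assert (Rabs (PI * IZR g / (2 * INR k)) <= 2).
  { unfold Rdiv. rewrite !Rabs_mult, Rabs_right by lra. rewrite Rabs_Rinv by lra. rewrite (Rabs_right (2 * INR k)) by lra.
    apply Rmult_le_reg_r with (2 * INR k). lra. rewrite Rmult_assoc, Rinv_l, Rmult_1_r by lra. nra. }
  pose proof (sin_sq_lb _ H2). replace ((- sin (PI * IZR g / (2 * INR k)))^2) with (sin (PI * IZR g / (2 * INR k))^2) by ring.
  pose proof (pow2_ge_0 (sinh (PI * u / INR k))). lra.
Qed.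

Lemma f_bound_nz k g u : (1 <= k)%nat -> (- Z.of_nat k < g <= Z.of_nat k)%Z -> g <> 0%Z ->
  Cmod (f_kg k g u) <= 64 * h_gk g k.
Proof.
  intros Hk Hg H0. unfold f_kg. rewrite mod_nz by auto. unfold h_gk.
  destruct (Z.eqb_spec g 0); [contradiction|].
  set (S := Csinh (RtoC (PI * u / INR k) - Defs.Ci (PI * IZR g / (2 * INR k)))).
  pose proof (Smod_lb k g u Hk Hg) as Hl. fold S in Hl.
  assert (Hk1 : 1 <= INR k) by (apply (le_INR 1); lia).
  assert (Hg0 : IZR g <> 0) by (apply not_0_IZR; auto).
  assert (Hg2 : 0 < IZR g ^ 2) by (pose proof (Rsqr_pos_lt _ Hg0); unfold Rsqr in *; nra).
  pose proof PI_RGT_0.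
  assert (Hth : 0 < (PI * IZR g / (2 * INR k))^2 / 9).
  { replace ((PI * IZR g / (2 * INR k))^2 / 9) with (PI^2 * IZR g ^ 2 / (36 * INR k ^2)) by (field; lra).
    apply Rdiv_lt_0_compat. pose proof (pow_lt PI 2 H). nra. pose proof (pow_lt (INR k) 2 ltac:(lra)). nra. }
  assert (HS2 : Cmod (S ^ 2) = Cmod S ^ 2).
  { simpl. rewrite !Cmod_mult, Cmod_1. ring. }
  assert (HSn : (S ^ 2)%C <> 0%C).
  { intro E. rewrite E, Cmod_0 in HS2. lra. }
  rewrite Cmod_div by auto. rewrite HS2, Cmod_R, Rabs_right by (pose proof (pow2_ge_0 PI); lra).
  apply Rle_trans with (PI ^ 2 / ((PI * IZR g / (2 * INR k))^2 / 9)).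
  - unfold Rdiv. apply Rmult_le_compat_l. apply pow2_ge_0. apply Rinv_le_contravar; auto.
  - replace (PI ^ 2 / ((PI * IZR g / (2 * INR k))^2 / 9)) with (36 * (INR k ^ 2 / IZR g ^ 2)) by (field; lra).
    assert (0 <= INR k ^ 2 / IZR g ^ 2) by (apply Rdiv_le_0_compat; [apply pow2_ge_0| auto]). lra.
Qed.

Lemma f0_eq k u : (1 <= k)%nat -> u <> 0 -> f_kg k 0 u = RtoC (PI^2 * phie (PI * u / INR k)).
Proof.
  intros Hk Hu. assert (INR k <> 0) by (apply not_0_INR; lia). pose proof PI_RGT_0.
  assert (Hx : PI * u / INR k <> 0) by (unfold Rdiv; apply Rmult_integral_contrapositive; split; [apply Rmult_integral_contrapositive; split; lra| apply Rinv_neq_0_compat; auto]).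
  unfold f_kg. rewrite Zmod_0_l. simpl. f_equal. unfold phie. destruct (Req_EM_T _ 0); [contradiction|].
  unfold phi. pose proof (sinh_ne0 _ Hx). field. repeat split; auto; lra.
Qed.

Lemma f0_zero k : f_kg k 0 0 = RtoC 0.
Proof.
  unfold f_kg. rewrite Zmod_0_l. simpl. f_equal.
  replace (PI * 0 / INR k) with 0 by (unfold Rdiv; ring). rewrite sinh_0.
  rewrite Rmult_0_l. unfold Rdiv. rewrite Rinv_0. ring.
Qed.

Lemma f_bound_z k u : (1 <= k)%nat -> Cmod (f_kg k 0 u) <= 64 * h_gk 0 k.
Proof.
  intros Hk. unfold h_gk. simpl. pose proof PI_4. pose proof PI_RGT_0.
  destruct (Req_dec u 0) as [->|Hu].
  - rewrite f0_zero, Cmod_R, Rabs_R0. lra.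
  - rewrite f0_eq by auto. rewrite Cmod_R. unfold phie. destruct (Req_EM_T _ 0) as [E|E].
    + exfalso. assert (INR k <> 0) by (apply not_0_INR; lia). 
      apply Rmult_integral in E. destruct E as [E|E]. apply Rmult_integral in E; destruct E; lra.
      apply Rinv_neq_0_compat in H1. contradiction.
    + pose proof (phi_bound _ E). rewrite Rabs_mult. rewrite (Rabs_right (PI^2)) by (pose proof (pow2_ge_0 PI); lra).
      assert (PI^2 * Rabs (phi (PI * u / INR k)) <= PI^2 * 1) by (apply Rmult_le_compat_l; [apply pow2_ge_0| auto]).
      nra.
Qed.

Lemma f_bound k g u : (1 <= k)%nat -> (- Z.of_nat k < g <= Z.of_nat k)%Z ->
  Cmod (f_kg k g u) <= 64 * h_gk g k.
Proof.
  intros Hk Hg. destruct (Z.eq_dec g 0) as [->|Hg0].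
  - apply f_bound_z; auto.
  - apply f_bound_nz; auto.
Qed.

Lemma exRInt_except0 (F G : R -> C) : (forall u, continuous G u) -> (forall u, u <> 0 -> F u = G u) ->
  forall a b, ex_RInt F a b.
Proof.
  intros HG HFG a b. apply (ex_RInt_Chasles F a 0 b).
  - apply (ex_RInt_ext G F).
    + intros x Hx. symmetry. apply HFG. revert Hx. unfold Rmin, Rmax; destruct Rle_dec; lra.
    + apply (ex_RInt_continuous (V:=C_R_CompleteNormedModule)); auto.
  - apply (ex_RInt_ext G F).
    + intros x Hx. symmetry. apply HFG. revert Hx. unfold Rmin, Rmax; destruct Rle_dec; lra.
    + apply (ex_RInt_continuous (V:=C_R_CompleteNormedModule)); auto.
Qed.

Lemma cR_der (h : R -> R) x : ex_derive h x -> continuous h x.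
Proof. apply (ex_derive_continuous (V:=R_NormedModule)). Qed.

Lemma cont_w k z u : continuous (fun t => Cexp (- (RtoC (2 * PI * t ^ 2) / (RtoC (INR k) * z)))%C) u.
Proof.
  apply cC_exp, cC_opp. unfold Cdiv. apply cC_mult; [|apply cC_const].
  apply cC_RtoC. apply cR_der. auto_derive. auto.
Qed.

Lemma cont_G0 k z u : continuous (fun t => (Cexp (- (RtoC (2 * PI * t ^ 2) / (RtoC (INR k) * z))) * RtoC (PI^2 * phie (PI * t / INR k)))%C) u.
Proof.
  apply cC_mult; [apply cont_w|]. apply cC_RtoC. apply cR_mult; [apply continuous_const|].
  apply cR_phie. apply cR_der. auto_derive. auto.
Qed.

Lemma cont_pow2 (f : R -> C) x : continuous f x -> continuous (fun t => (f t ^ 2)%C) x.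
Proof.
  intros H. apply (continuous_ext (fun t => (f t * (f t * 1))%C)); [reflexivity|].
  apply cC_mult; auto. apply cC_mult; auto. apply cC_const.
Qed.

Lemma cont_Csinh (f : R -> C) x : continuous f x -> continuous (fun t => Csinh (f t)) x.
Proof.
  intros H. unfold Csinh, Cdiv. apply cC_mult; [|apply cC_const].
  apply cC_minus; apply cC_exp; auto. apply cC_opp; auto.
Qed.

Lemma integrand_ex k g z : (1 <= k)%nat -> (- Z.of_nat k < g <= Z.of_nat k)%Z ->
  forall a b, ex_RInt (integrand k g z) a b.
Proof.
  intros Hk Hg. destruct (Z.eq_dec g 0) as [->|Hg0].
  - apply (exRInt_except0 _ _ (cont_G0 k z)). intros u Hu. unfold integrand. rewrite f0_eq; auto.
  - assert (Hc : forall u, continuous (integrand k g z) u).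
    2: { apply (exRInt_except0 _ _ Hc). auto. }
    intros u.
    unfold integrand, f_kg. rewrite mod_nz by auto.
    apply cC_mult; [apply cont_w|]. unfold Cdiv. apply cC_mult; [apply cC_const|].
    apply cC_inv.
    + pose proof (Smod_lb k g u Hk Hg). intro E.
      assert (Hc : Cmod ((Csinh (RtoC (PI * u / INR k) - Defs.Ci (PI * IZR g / (2 * INR k)))) ^ 2)%C = 0) by (rewrite E; apply Cmod_0).
      simpl in Hc. rewrite !Cmod_mult, Cmod_1 in Hc.
      assert (Hk1 : 1 <= INR k) by (apply (le_INR 1); lia).
      assert (Hg0' : IZR g <> 0) by (apply not_0_IZR; auto).
      assert (0 < (PI * IZR g / (2 * INR k))^2 / 9).
      { assert (PI * IZR g / (2 * INR k) <> 0).
        { unfold Rdiv. apply Rmult_integral_contrapositive; split. apply Rmult_integral_contrapositive; split; auto. pose proof PI_RGT_0; lra.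
          apply Rinv_neq_0_compat. lra. }
        pose proof (Rsqr_pos_lt _ H0). unfold Rsqr in H1. lra. }
      nra.
    + apply cont_pow2, cont_Csinh. apply cC_minus; [|apply cC_const]. apply cC_RtoC. apply cR_der. auto_derive. lra.
Qed.

Lemma C_alg2 (p I J : C) : (p * I - p * J = p * (I - J))%C.
Proof. destruct p, I, J. unfold Cmult, Cminus, Cplus, Copp; simpl. f_equal; ring. Qed.

Theorem lemma3p2 (b : R) :
  exists Cst : R, 0 < Cst /\
  forall (k : nat) (g : Z) (z : C),
    (1 <= k)%nat ->
    (- Z.of_nat k < g <= Z.of_nat k)%Z ->
    0 < Re z ->
    INR k / 2 <= Re (/ z)%C ->
    (b <= 0 ->
       exists I : C,
         is_RInt_gen (integrand k g z) (Rbar_locally m_infty) (Rbar_locally p_infty) I /\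
         Cmod (prefactor k b z * I)%C <= Cst * Rpower (Cmod z) (5 / 2) * h_gk g k) /\
    (0 < b ->
       exists I J : C,
         is_RInt_gen (integrand k g z) (Rbar_locally m_infty) (Rbar_locally p_infty) I /\
         is_RInt (integrand k g z) (- sqrt b) (sqrt b) J /\
         Cmod (prefactor k b z * I - prefactor k b z * J)%C
           <= Cst * Rpower (Cmod z) (5 / 2) * h_gk g k).
Proof.
  pose proof PI_RGT_0 as HPI.
  exists (64 * PI * exp (PI * Rabs b)). split.
  { pose proof (exp_pos (PI * Rabs b)). nra. }
  intros k g z Hk Hg Hz Hr.
  assert (Hk1 : 1 <= INR k) by (apply (le_INR 1); lia).
  set (al := 2 * PI * Re (/ z) / INR k).
  assert (Hal : PI <= al).
  { unfold al. apply Rmult_le_reg_r with (INR k); [lra|].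
    unfold Rdiv. rewrite Rmult_assoc, Rinv_l, Rmult_1_r by lra. nra. }
  set (h := h_gk g k).
  assert (Hh : 0 <= h).
  { unfold h, h_gk. destruct (Z.eqb_spec g 0); [lra|].
    assert (IZR g <> 0) by (apply not_0_IZR; auto).
    pose proof (Rsqr_pos_lt _ H). unfold Rsqr in H0.
    apply Rdiv_le_0_compat. apply pow2_ge_0. nra. }
  set (M := 64 * h).
  assert (HM : 0 <= M) by (unfold M; lra).
  assert (HF : forall u, Cmod (integrand k g z u) <= M * exp (- (al * u^2))).
  { intros u. rewrite integrand_mod by auto. fold al. rewrite Rmult_comm.
    apply Rmult_le_compat_r. left; apply exp_pos. apply f_bound; auto. }
  destruct (gen (integrand k g z) M al HM Hal (integrand_ex k g z Hk Hg) HF) as [I [HI [HIb Htail]]].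
  assert (Hpm : Cmod (prefactor k b z) = exp (al * b) * Rpower (Cmod z) (5/2)) by (apply prefactor_mod; auto).
  set (Rz := Rpower (Cmod z) (5/2)) in *.
  assert (HRz : 0 < Rz) by (unfold Rz, Rpower; apply exp_pos).
  split.
  - intros Hb. exists I. split; auto. rewrite Cmod_mult, Hpm.
    assert (exp (al*b) <= 1).
    { rewrite <- exp_0. destruct (Req_dec (al*b) 0) as [E|E]; [rewrite E; lra| left; apply exp_increasing; nra]. }
    assert (1 <= exp (PI * Rabs b)) by (rewrite <- exp_0; pose proof (Rabs_pos b);
       destruct (Req_dec (PI * Rabs b) 0) as [E|E]; [rewrite E; lra| left; apply exp_increasing; nra]).
    pose proof (Cmod_ge_0 I).
    apply Rle_trans with (1 * Rz * (M * PI)).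
    + apply Rmult_le_compat; try nra. apply Rmult_le_pos; [left; apply exp_pos| lra].
    + unfold M. assert (0 <= h * Rz * PI) by (apply Rmult_le_pos; [apply Rmult_le_pos|]; lra).
      replace (1 * Rz * (64 * h * PI)) with (64 * (h * Rz * PI)) by ring.
      replace (64 * PI * exp (PI * Rabs b) * Rz * h) with (64 * (h * Rz * PI) * exp (PI * Rabs b)) by ring.
      nra.
  - intros Hb. exists I, (RIntC (integrand k g z) (- sqrt b) (sqrt b)). split; [auto|split].
    + apply (RInt_correct (V:=C_R_CompleteNormedModule)). apply integrand_ex; auto.
    + rewrite C_alg2, Cmod_mult, Hpm. pose proof (Htail b Hb).
      rewrite Rabs_right by lra.
      apply Rle_trans with (exp (al * b) * Rz * (M * exp (- (al * b)) * exp (PI * b) * PI)).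
      * apply Rmult_le_compat_l; auto. apply Rmult_le_pos; [left; apply exp_pos| lra].
      * right. unfold M. replace (exp (al * b) * Rz * (64 * h * exp (- (al * b)) * exp (PI * b) * PI))
          with ((exp (al * b) * exp (- (al * b))) * (64 * PI * exp (PI * b) * Rz * h)) by ring.
        rewrite <- exp_plus. replace (al * b + - (al * b)) with 0 by ring. rewrite exp_0. ring.
Qed.
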